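(* Let $F(\xi,p)=(\sigma(\xi),f_{\xi_0}(p))$ be a step skew-product on $\Sigma_N\times I$, $I=[0,1]$, with $f_i$ $C^1$-diffeomorphisms onto their images, and let $\mathcal I_P,\mathcal I_R,A,\Sigma_A,\sigma_A,\pi$, $\overline{\,\cdot\,}$ be as in the context. Let $R(x)=1-x$ and let $G(\omega,x)=(\sigma_A(\omega),g_{\omega_0}(x))$ on $\Sigma_A\times I$ with $g_i=f_i$, $g_{i+N}=R\circ f_i\circ R$ for $i\in\mathcal I_P$ and $g_i=R\circ f_i$, $g_{i+N}=f_i\circ R$ for $i\in\mathcal I_R$. Let $C=\{\omega\in\Sigma_A\colon\omega_0\in\{1,\ldots,N\}\}$ and define $\Pi\colon\Sigma_A\times I\to\Sigma_N\times I$ by $\Pi(\omega,x)=(\pi(\omega),x)$ if $\omega\in C$ and $\Pi(\omega,x)=(\pi(\omega),R(x))$ otherwise. Then $\Pi$ is a two-to-one semi-conjugation between $G$ and $F$, i.e. $\Pi$ is continuous, surjective, every point has exactly two preimages, and $\Pi\circ G=F\circ\Pi$.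
   Context: $\mathcal I_P$ (resp. $\mathcal I_R$) is the set of $i$ such that $f_i$ preserves (resp. reverses) orientation. $A=(a_{ij})_{i,j=1}^{2N}$ with $a_{ij}=1$ if ($i\in\mathcal I_P$, $j\le N$), or ($i\in\mathcal I_R$, $j>N$), or ($i-N\in\mathcal I_P$, $j>N$), or ($i-N\in\mathcal I_R$, $j\le N$), and $a_{ij}=0$ otherwise. $\Sigma_A$ is the set of sequences $\omega\in\{1,\ldots,2N\}^{\mathbb Z}$ with $a_{\omega_n\omega_{n+1}}=1$ for all $n$, $\sigma_A$ its shift; $\overline i=i$ for $i\le N$, $\overline i=i-N$ for $i>N$; $\pi(\omega)_n=\overline{\omega_n}$. *)

(* Defs.v *)
From HB Require Import structures.
From mathcomp Require Import all_boot all_order all_algebra.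
From mathcomp Require Import all_classical all_reals all_analysis.
Import Order.TTheory GRing.Theory Num.Theory.
Import numFieldNormedType.Exports.

Set Implicit Arguments.
Unset Strict Implicit.
Unset Printing Implicit Defensive.

Local Open Scope classical_set_scope.
Local Open Scope ring_scope.

(* Two-sided sequences of symbols, with the product (pointwise) topology;
   nat carries the discrete topology.  Symbols are 1-based, as in the paper. *)
Definition seqZ := {ptws int -> nat}.

Section Defs.
Variable R : realType.

Definition inI (x : R) : Prop := 0 <= x <= 1.

Definition C1_diffeo_onto_image (f : R -> R) : Prop :=
  [/\ (forall x, inI x -> inI (f x)),
      (forall x y, inI x -> inI y -> f x = f y -> x = y),
      (forall x, inI x -> derivable f x 1),
      {within `[0, 1], continuous (derive1 f)} &
      (forall x, inI x -> derive1 f x != 0)].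

Definition orient_pres (f : R -> R) : Prop :=
  forall x y, inI x -> inI y -> x < y -> f x < f y.
Definition orient_rev (f : R -> R) : Prop :=
  forall x y, inI x -> inI y -> x < y -> f y < f x.

Variables (N : nat) (f : nat -> R -> R).

Definition IP (i : nat) : Prop := (1 <= i <= N)%N /\ orient_pres (f i).
Definition IR (i : nat) : Prop := (1 <= i <= N)%N /\ orient_rev (f i).

Definition amat (i j : nat) : Prop :=
  (IP i /\ (j <= N)%N) \/ (IR i /\ (N < j)%N) \/
  ((N < i)%N /\ IP (i - N) /\ (N < j)%N) \/
  ((N < i)%N /\ IR (i - N) /\ (j <= N)%N).

Definition SigmaN : set seqZ := [set xi | forall n, (1 <= xi n <= N)%N].
Definition SigmaA : set seqZ :=
  [set w | forall n, (1 <= w n <= N + N)%N /\ amat (w n) (w (n + 1))].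

Definition shift (w : seqZ) : seqZ := fun n => w (n + 1).

Definition bar (i : nat) : nat := if (i <= N)%N then i else (i - N)%N.
Definition piA (w : seqZ) : seqZ := fun n => bar (w n).

Definition Fsk (p : seqZ * R) : seqZ * R := (shift p.1, f (p.1 0) p.2).

Definition Rf (x : R) : R := 1 - x.

Definition g (i : nat) : R -> R :=
  if (i <= N)%N then
    (if asbool (orient_pres (f i)) then f i else Rf \o f i)
  else
    (if asbool (orient_pres (f (i - N))) then Rf \o f (i - N) \o Rf
     else f (i - N) \o Rf).

Definition Gsk (p : seqZ * R) : seqZ * R := (shift p.1, g (p.1 0) p.2).

Definition Ccyl : set seqZ := [set w | (1 <= w 0 <= N)%N].

Definition PiMap (p : seqZ * R) : seqZ * R :=
  if asbool (Ccyl p.1) then (piA p.1, p.2) else (piA p.1, Rf p.2).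

End Defs.

(* Main.v *)
Require Import Defs.
From HB Require Import structures.
From mathcomp Require Import all_boot all_order all_algebra.
From mathcomp Require Import all_classical all_reals all_analysis.
Import Order.TTheory GRing.Theory Num.Theory.
Import numFieldNormedType.Exports.
Local Open Scope classical_set_scope.
Local Open Scope ring_scope.
From mathcomp Require Import zify lra.

Definition dint : Type := int.
HB.instance Definition _ := Choice.on dint.
HB.instance Definition _ := hasNbhs.Build dint principal_filter.
HB.instance Definition _ := Discrete_ofNbhs.Build dint erefl.

Lemma near_coord (R : realType) (w : seqZ) (x : R) (t : int) :
  \forall p \near (w, x), p.1 t = w t.
Proof.
have h1 : (fun p : seqZ * R => p.1) @ nbhs (w, x) --> w.
  exact: (@cvg_fst _ _ (nbhs w) (nbhs x) _).
have h2 : (fun p : seqZ * R => p.1 t) @ nbhs (w, x) --> w t.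
  have hp : (fun g : seqZ => g t) @ nbhs w --> w t.
    exact: (@proj_continuous int (fun _ => nat) t w).
  have h3 := (@cvg_comp _ _ _ _ _ _ _ _ h1 hp). exact h3.
by move/(discrete_cvg _ _ _): h2.
Qed.

Lemma PiMap_cont (R : realType) N : continuous (@PiMap R N).
Proof.
move=> [w x]; change (PiMap N @ nbhs (w, x) --> PiMap N (w, x)).
have hpi : (fun p : seqZ * R => piA N p.1) @ nbhs (w, x) --> piA N w.
  apply/(@pointwise_cvgP dint nat) => t.
  apply/discrete_cvg.
  rewrite !nbhs_simpl /=. have h := near_coord _ w x t. apply: filterS h. move=> p /= e. exact: (congr1 (bar N) e).
have hsnd : (fun p : seqZ * R => p.2) @ nbhs (w, x) --> x.
  exact: (@cvg_snd _ _ (nbhs w) (nbhs x) _).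
have n0 := near_coord _ w x 0.
case: (asboolP (Ccyl N w)) => hC.
- have -> : PiMap N (w, x) = (piA N w, x) by rewrite /PiMap /=; case: asboolP.
  apply: cvg_trans; first apply: (near_eq_cvg (f := fun p : seqZ * R => (piA N p.1, p.2))).
    apply: filterS n0 => p /= e; rewrite /PiMap /Ccyl /= e.
    by case: asboolP.
  have hh := @cvg_pair _ _ _ _ _ _ _ _ _ _ _ hpi hsnd. exact (hh (nbhs_filter _) (nbhs_filter _) (nbhs_filter _)).
- have -> : PiMap N (w, x) = (piA N w, Rf x) by rewrite /PiMap /=; case: asboolP.
  apply: cvg_trans; first apply: (near_eq_cvg (f := fun p : seqZ * R => (piA N p.1, Rf p.2))).
    apply: filterS n0 => p /= e; rewrite /PiMap /Ccyl /= e.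
    by case: asboolP.
  have hr : (fun p : seqZ * R => Rf p.2) @ nbhs (w, x) --> Rf x.
    rewrite /Rf; apply: cvgB => //; exact: cvg_cst.
  have hh := @cvg_pair _ _ _ _ _ _ _ _ _ _ _ hpi hr. exact (hh (nbhs_filter _) (nbhs_filter _) (nbhs_filter _)).
Qed.

Section Comb.
Variables (R : realType) (N : nat) (f : nat -> R -> R).
Hypothesis Hf : forall i, (1 <= i <= N)%N -> C1_diffeo_onto_image (f i).

Lemma excl (h : R -> R) : orient_pres h -> orient_rev h -> False.
Proof.
move=> hp hr.
have i0 : inI (0 : R) by rewrite /inI lexx ler01.
have i1 : inI (1 : R) by rewrite /inI lexx ler01.
have := hp 0 1 i0 i1 ltr01; have := hr 0 1 i0 i1 ltr01.
by move=> a b; move: (lt_trans a b); rewrite ltxx.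
Qed.

Lemma dich i : (1 <= i <= N)%N -> orient_pres (f i) \/ orient_rev (f i).
Proof.
move=> /Hf [_ inj der _ _].
have c : {within [set` `[(0:R), 1]], continuous (f i)}.
  apply: derivable_within_continuous => x; rewrite in_itv /= => hx.
  exact: der.
have inj' : {in `[(0:R), 1] &, injective (f i)}.
  by move=> x y; rewrite !in_itv /= => hx hy; apply: inj.
case: (itv_continuous_inj_mono c inj') => hm; [left|right] => x y hx hy xy.
- by apply: hm => //; rewrite in_itv.
- by apply: hm => //; rewrite in_itv.
Qed.

End Comb.

Fixpoint epos (r : int -> bool) (b : bool) (k : nat) : bool :=
  match k with 0%N => b | k'.+1 => epos r b k' (+) r (Posz k') end.
Fixpoint eneg (r : int -> bool) (b : bool) (k : nat) : bool :=
  match k with 0%N => b (+) r (Negz 0) | k'.+1 => eneg r b k' (+) r (Negz k'.+1) end.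
Definition ez r b (n : int) : bool :=
  match n with Posz k => epos r b k | Negz k => eneg r b k end.

Lemma PoszS (k : nat) : Posz k + 1 = Posz k.+1.
Proof. by rewrite -addn1 PoszD. Qed.
Lemma NegzS (k : nat) : Negz k.+1 + 1 = Negz k.
Proof. rewrite !NegzE; lia. Qed.
Lemma Negz0 : Negz 0 + 1 = 0.
Proof. by []. Qed.

Lemma ez_rec r b n : ez r b (n + 1) = ez r b n (+) r n.
Proof.
case: n => k.
- by rewrite PoszS.
- case: k => [|k].
  + by rewrite Negz0 /= -addbA addbb addbF.
  + by rewrite NegzS /= -addbA addbb addbF.
Qed.

Lemma ez0 r b : ez r b 0 = b.
Proof. by []. Qed.

Lemma rec_back (r e : int -> bool) : (forall n, e (n + 1) = e n (+) r n) ->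
  forall n, e n = e (n + 1) (+) r n.
Proof. by move=> H n; rewrite H addbK. Qed.

Lemma rec_uniq (r e1 e2 : int -> bool) :
  (forall n, e1 (n + 1) = e1 n (+) r n) ->
  (forall n, e2 (n + 1) = e2 n (+) r n) -> e1 0 = e2 0 -> forall n, e1 n = e2 n.
Proof.
move=> H1 H2 H0; case => k.
- elim: k => [//|k IH]; by rewrite -PoszS H1 H2 IH.
- elim: k => [|k IH].
  + by rewrite (@rec_back r e1 H1) (@rec_back r e2 H2) Negz0 H0.
  + by rewrite (@rec_back r e1 H1) (@rec_back r e2 H2) NegzS IH.
Qed.

Section Comb2.
Variables (R : realType) (N : nat) (f : nat -> R -> R).
Hypothesis Hf : forall i, (1 <= i <= N)%N -> C1_diffeo_onto_image (f i).

Definition rr (xi : seqZ) (n : int) : bool := ~~ `[< orient_pres (f (xi n)) >].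

Lemma layer (w : seqZ) : SigmaA N f w -> forall n : int,
  (N < w (n + 1)%R)%N = (N < w n)%N (+) ~~ `[< orient_pres (f (bar N (w n))) >].
Proof.
move=> hw n; have [hr ha] := hw n; rewrite /bar.
case: ha => [[[hi hp] hj]|[[[hi hq] hj]|[[hi [[_ hp] hj]]|[hi [[_ hq] hj]]]]].
- have -> : (w n <= N)%N by lia.
  rewrite (asboolT hp) /=.
  have -> : (N < w (n + 1)%R)%N = false by rewrite ltnNge hj.
  by have -> : (N < w n)%N = false by lia.
- have -> : (w n <= N)%N by lia.
  rewrite (asboolF (fun hp => @excl R _ hp hq)) /=.
  have -> : (N < w (n + 1)%R)%N = true by apply: hj.
  by have -> : (N < w n)%N = false by lia.
- have -> : (w n <= N)%N = false by lia.
  rewrite (asboolT hp) /=.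
  have -> : (N < w (n + 1)%R)%N = true by apply: hj.
  by have -> : (N < w n)%N = true by lia.
- have -> : (w n <= N)%N = false by lia.
  rewrite (asboolF (fun hp => @excl R _ hp hq)) /=.
  have -> : (N < w (n + 1)%R)%N = false by rewrite ltnNge hj.
  by have -> : (N < w n)%N = true by lia.
Qed.

Definition wb (xi : seqZ) (b : bool) : seqZ :=
  fun n => if ez (rr xi) b n then (xi n + N)%N else xi n.

Lemma wb_bar xi b n : SigmaN N xi -> bar N (wb xi b n) = xi n.
Proof.
move=> /(_ n) hx; rewrite /wb; case: ifP => _; rewrite /bar.
- have -> : (xi n + N <= N)%N = false by lia.
  by rewrite addnK.
- by have -> : (xi n <= N)%N by lia.
Qed.

Lemma wb_Sigma xi b : SigmaN N xi -> SigmaA N f (wb xi b).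
Proof.
move=> hx n; have hn := hx n; have hn1 := hx (n + 1); split.
  by rewrite /wb; case: ifP; lia.
have er := ez_rec (rr xi) b n.
rewrite /amat /wb er.
have [hp|hq] := @dich R N f Hf _ hn.
- have e : rr xi n = false by rewrite /rr (asboolT hp).
  rewrite e addbF; case: (ez (rr xi) b n).
  + right; right; left; split; first lia.
    by rewrite addnK; split; [split|lia].
  + by left; split; [split|lia].
- have e : rr xi n = true by rewrite /rr (asboolF (fun hp => @excl R _ hp hq)).
  rewrite e addbT; case: (ez (rr xi) b n) => /=.
  + right; right; right; split; first lia.
    by rewrite addnK; split; [split|lia].
  + by right; left; split; [split|lia].
Qed.

Lemma determine (w xi : seqZ) : SigmaA N f w -> piA N w = xi -> SigmaN N xi ->
  w = wb xi (N < w 0)%N.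
Proof.
move=> hw hpi hx.
have hb : forall n, bar N (w n) = xi n by move=> n; rewrite -hpi.
have L : forall n, (N < w n)%N = ez (rr xi) (N < w 0)%N n.
  apply: rec_uniq => //; last exact: ez_rec.
  by move=> n; rewrite layer // hb.
apply: funext => n; rewrite /wb -L.
have := hb n; have [hr _] := hw n; rewrite /bar; case: ifP => h1 h2;
  case: ifP => h3; lia.
Qed.

End Comb2.

Lemma RfK (R : realType) (y : R) : Rf (Rf y) = y.
Proof. by rewrite /Rf opprB addrC subrK. Qed.

Lemma inI_Rf (R : realType) (y : R) : inI y -> inI (Rf y).
Proof. rewrite /inI /Rf => /andP[h0 h1]; apply/andP; split; lra. Qed.

Lemma part5_aux (R : realType) (N : nat) (f : nat -> R -> R) (a b : nat) (x : R) :
  (0 < a <= N + N)%N -> (0 < b <= N + N)%N -> amat N f a b ->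
  (if (0 < b <= N)%N then g N f a x else Rf (g N f a x)) =
  f (bar N a) (if (0 < a <= N)%N then x else Rf x).
Proof.
move=> hr hb ha; rewrite /g /bar.
case: ha => [[[hi hp] hj]|[[[hi hq] hj]|[[hi [[_ hp] hj]]|[hi [[_ hq] hj]]]]].
- have -> : (0 < b <= N)%N by lia.
  have -> : (0 < a <= N)%N by lia.
  have -> : (a <= N)%N by lia.
  by rewrite (asboolT hp).
- have -> : (0 < b <= N)%N = false by lia.
  have -> : (0 < a <= N)%N by lia.
  have -> : (a <= N)%N by lia.
  by rewrite (asboolF (fun hp => @excl R _ hp hq)) /= RfK.
- have -> : (0 < b <= N)%N = false by lia.
  have -> : (0 < a <= N)%N = false by lia.
  have -> : (a <= N)%N = false by lia.
  by rewrite (asboolT hp) /= RfK.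
- have -> : (0 < b <= N)%N by lia.
  have -> : (0 < a <= N)%N = false by lia.
  have -> : (a <= N)%N = false by lia.
  by rewrite (asboolF (fun hp => @excl R _ hp hq)).
Qed.

Theorem lemma3p5 (R : realType) (N : nat) (f : nat -> R -> R) :
  (forall i, (1 <= i <= N)%N -> C1_diffeo_onto_image (f i)) ->
  let XA := SigmaA N f `*` [set x : R | inI x] in
  let XN := SigmaN N `*` [set x : R | inI x] in
  [/\ {within XA, continuous PiMap N},
      (forall p, XA p -> XN (PiMap N p)),
      (forall q, XN q -> exists p, XA p /\ PiMap N p = q),
      (forall q, XN q -> exists p1 p2,
          [/\ XA p1 /\ XA p2, p1 <> p2, PiMap N p1 = q, PiMap N p2 = q &
              forall p, XA p -> PiMap N p = q -> p = p1 \/ p = p2]) &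
      (forall p, XA p -> PiMap N (Gsk N f p) = Fsk f (PiMap N p))].
Proof.
move=> Hf XA XN.
have P4 : forall q, XN q -> exists p1 p2,
          [/\ XA p1 /\ XA p2, p1 <> p2, PiMap N p1 = q, PiMap N p2 = q &
              forall p, XA p -> PiMap N p = q -> p = p1 \/ p = p2].
  move=> [xi y] [/= hx hy].
  have h0 : (0 < xi (Posz 0) <= N)%N := hx 0.
  exists (@wb R N f xi false, y), (@wb R N f xi true, Rf y); split.
  - split; split => //=; try exact: (@wb_Sigma R N f Hf _ _ hx); exact: inI_Rf.
  - move=> [] /(congr1 (fun g : seqZ => g 0)); rewrite /wb /= => e; lia.
  - rewrite /PiMap /= asboolT; last by rewrite /Ccyl /wb /=; exact h0.
    by congr pair; apply: funext => n; rewrite /piA (@wb_bar R N f _ _ _ hx).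
  - rewrite /PiMap /= asboolF; last by rewrite /Ccyl /wb /=; lia.
    by rewrite RfK; congr pair; apply: funext => n; rewrite /piA (@wb_bar R N f _ _ _ hx).
  - move=> [w x] [/= hw hxI]; rewrite /PiMap /=.
    have hw0 := hw 0.
    case: asboolP => hc [epi ex].
    + left; rewrite (@determine R N f _ _ hw epi hx) ex.
      have e0 : (N < w 0)%N = false by move: hc; rewrite /Ccyl /=; case: (w _) => [|k]; lia.
      by rewrite e0.
    + right; rewrite (@determine R N f _ _ hw epi hx) -ex RfK.
      have hw0' : (0 < w (Posz 0) <= N + N)%N := (hw 0).1.
      have e0 : (N < w 0)%N = true.
        by move: hc hw0'; rewrite /Ccyl /=; case: (w _) => [|k]; lia.
      by rewrite e0.
split.
- exact: continuous_subspaceT (PiMap_cont R N).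
- move=> [w x] [/= hw hx]; rewrite /PiMap /=.
  have hpi : SigmaN N (piA N w).
    by move=> n; have [h _] := hw n; rewrite /piA /bar; case: ifP; lia.
  by case: asboolP => _; split => //=; exact: inI_Rf.
- move=> q /P4 [p1 [p2 [[h1 _] _ e1 _ _]]]; by exists p1.
- exact: P4.
- move=> [w x] [/= hw hx]; rewrite /PiMap /Gsk /Fsk /=.
  have [hr ha] := hw 0.
  have E : forall (c : bool) (u : seqZ) (y z : R),
      (if c then (u, y) else (u, z)) = (u, if c then y else z) by case.
  rewrite !E /=; congr pair.
  rewrite !asboolb.
  exact: (@part5_aux R N f _ _ x hr (hw (0 + 1)).1 ha).
Qed.
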